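(* Let $J=\{2\}^*\{1\}\{2\}^*\{1\}^*\cup\{2\}^*\subseteq\mathcal{A}_2^*$. Then $(\mathcal{A}_2,J)$ is a biautomatic structure for $\mathrm{rps}_2$.
   Context: Let $\mathcal{A}_2=\{1<2\}$. An rPS tableau is a finite (possibly empty) sequence of nonempty bottom-justified columns of boxes filled with positive integers, such that the entries of each column are weakly decreasing from top to bottom and the bottom entries of the columns form a strictly increasing sequence from left to right. Right insertion of a symbol $a$ into an rPS tableau $B$: if $a$ is strictly greater than every entry of the bottom row, append a new column consisting of $a$ at the right end; otherwise, let $z$ be the leftmost bottom-row entry with $z\geq a$ and put $a$ in a new box at the bottom of the column of $z$ (the previous entries of that column move up one box). For $w=w_1\cdots w_k$, $\mathfrak{R}_r(w)$ is obtained by starting with the empty tableau and right-inserting $w_1,\dots,w_k$ in order. The monoid $\mathrm{rps}_2$ is the quotient of $\mathcal{A}_2^*$ by the congruence $u\equiv v\iff\mathfrak{R}_r(u)=\mathfrak{R}_r(v)$; words are identified with the elements they represent. For an alphabet $\Sigma$ and a padding symbol $\$\notin\Sigma$, $\delta_R:\Sigma^*\times\Sigma^*\to((\Sigma\cup\{\$\})\times(\Sigma\cup\{\$\}))^*$ sends $(u_1\cdots u_m,v_1\cdots v_p)$ to the word of pairs $(u_i,v_i)$ obtained after padding the shorter word on the right with $\$$'s to equal length; $\delta_L$ is the same with padding on the left. For a monoid $M$ generated by finite $\Sigma$ and a regular language $L\subseteq\Sigma^*$ mapping onto $M$, define $L_a=\{(u,v)\in L\times L: ua=_M v\}$ and ${}_aL=\{(u,v)\in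 L\times L: au=_M v\}$. $(\Sigma,L)$ is a biautomatic structure for $M$ if $(L_a)\delta_R$, $({}_aL)\delta_R$, $(L_a)\delta_L$ and $({}_aL)\delta_L$ are regular languages for every $a\in\Sigma\cup\{\varepsilon\}$. *)

(* Defs.v *)
From mathcomp Require Import all_boot.
Set Implicit Arguments. Unset Strict Implicit. Unset Printing Implicit Defensive.

(* An rPS tableau is represented as the list of its columns from left to
   right; each column is listed from BOTTOM to TOP (head = bottom entry).
   Entries are positive integers (nat). *)
Definition rps_tableau := seq (seq nat).

Definition is_rPS (t : rps_tableau) : Prop :=
  all (fun c => (c != [::]) && sorted leq c) t /\
  sorted ltn (map (head 0) t).

Fixpoint rins (t : rps_tableau) (a : nat) : rps_tableau :=
  match t with
  | [::] => [:: [:: a]]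
  | c :: t' => if a <= head 0 c then (a :: c) :: t' else c :: rins t' a
  end.

(* The alphabet A_2 = {1 < 2}: the ordinal i : 'I_2 stands for the symbol i+1. *)
Definition A2 := 'I_2.
Definition symval (x : A2) : nat := (nat_of_ord x).+1.
Definition a1 : A2 := @Ordinal 2 0 isT.
Definition a2 : A2 := @Ordinal 2 1 isT.

Definition Rr (w : seq A2) : rps_tableau := foldl rins [::] (map symval w).

Definition rps2_eq (u v : seq A2) : Prop := Rr u = Rr v.

Definition regular (X : finType) (L : seq X -> Prop) : Prop :=
  exists (Q : finType) (q0 : Q) (d : Q -> X -> Q) (F : pred Q),
    forall w, L w <-> F (foldl d q0 w).

(** * Padded convolutions delta_R, delta_L ($ is None) *)
Definition padR (S : Type) (n : nat) (s : seq S) : seq (option S) :=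
  map Some s ++ nseq (n - size s) None.
Definition padL (S : Type) (n : nat) (s : seq S) : seq (option S) :=
  nseq (n - size s) None ++ map Some s.
Definition deltaR (S : Type) (u v : seq S) : seq (option S * option S) :=
  let n := maxn (size u) (size v) in zip (padR n u) (padR n v).
Definition deltaL (S : Type) (u v : seq S) : seq (option S * option S) :=
  let n := maxn (size u) (size v) in zip (padL n u) (padL n v).

Definition conv_image (S : Type) (delta : seq S -> seq S -> seq (option S * option S))
  (R : seq S -> seq S -> Prop) : seq (option S * option S) -> Prop :=
  fun x => exists u v, R u v /\ delta u v = x.

(* word for a in Sigma ∪ {epsilon} (None = epsilon) *)
Definition oword (S : Type) (a : option S) : seq S :=
  if a is Some x then [:: x] else [::].

(** * Biautomatic structure for the monoid M = Sigma^* / eqM.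
    Words are identified with the elements they represent; u =_M v is eqM u v. *)
Definition biautomatic_structure (S : finType) (eqM : seq S -> seq S -> Prop)
  (L : seq S -> Prop) : Prop :=
  [/\ regular L,
      (forall w, exists u, L u /\ eqM u w) &
      forall a : option S,
        let La  := fun u v => L u /\ L v /\ eqM (u ++ oword a) v in
        let aL  := fun u v => L u /\ L v /\ eqM (oword a ++ u) v in
        [/\ regular (conv_image (@deltaR S) La),
            regular (conv_image (@deltaR S) aL),
            regular (conv_image (@deltaL S) La) &
            regular (conv_image (@deltaL S) aL)]].

Definition J (w : seq A2) : Prop :=
  (exists i j k : nat, w = nseq i a2 ++ a1 :: nseq j a2 ++ nseq k a1)
  \/ (exists i : nat, w = nseq i a2).

(* Main.v *)
Require Import Defs.
From mathcomp Require Import all_boot zify.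
From Stdlib Require Import Setoid.
Set Implicit Arguments. Unset Strict Implicit. Unset Printing Implicit Defensive.

Section Reg.
Variable X : finType.

Lemma regular_ext (L L' : seq X -> Prop) :
  (forall w, L w <-> L' w) -> regular L -> regular L'.
Proof.
move=> E [Q [q0 [d [F H]]]]; exists Q, q0, d, F => w.
by split => [/E/H|/H/E].
Qed.

Lemma regular_false : regular (fun _ : seq X => False).
Proof. by exists unit, tt, (fun _ _ => tt), pred0. Qed.

Lemma regular_or (L1 L2 : seq X -> Prop) :
  regular L1 -> regular L2 -> regular (fun w => L1 w \/ L2 w).
Proof.
move=> [Q1 [q1 [d1 [F1 H1]]]] [Q2 [q2 [d2 [F2 H2]]]].
exists (Q1 * Q2)%type, (q1, q2), (fun q x => (d1 q.1 x, d2 q.2 x)),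
  (fun q => F1 q.1 || F2 q.2) => w.
have E : forall w p, foldl (fun q x => (d1 q.1 x, d2 q.2 x)) p w
   = (foldl d1 p.1 w, foldl d2 p.2 w).
  by elim=> [|x s IH] [p1 p2] //=; rewrite IH.
rewrite E H1 H2 /=; split; first by case=> ->; rewrite ?orbT.
by case/orP; auto.
Qed.

Lemma regular_eps : regular (fun w : seq X => w = [::]).
Proof.
exists bool, true, (fun _ _ => false), id => w.
case: w => [|x s] /=; first by split.
split => // H; exfalso; move: H; by elim: s.
Qed.

Lemma regular_lit (x : X) : regular (fun w => w = [:: x]).
Proof.
exists (option bool), (Some false),
  (fun q y => if q is Some false then (if y == x then Some true else None) else None),
  (fun q => q == Some true) => w.
have N : forall s, foldl (fun q y => if q is Some false then (if y == x then Some true else None) else None) None s = None.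
  by elim=> //.
case: w => [|y s] //=.
case: (y =P x) => [->|ne]; last by rewrite N; split=> // [[]].
case: s => [|z s] //=; rewrite N; split=> //.
Qed.

Lemma regular_star (x : X) : regular (fun w => exists n, w = nseq n x).
Proof.
exists bool, true, (fun b y => b && (y == x)), id => w.
have E : forall s b, foldl (fun b y => b && (y == x)) b s = b && all (pred1 x) s.
  by elim=> [|y s IH] b /=; rewrite ?andbT // IH andbA.
rewrite E /=; split.
  by case=> n ->; apply: all_pred1_nseq.
by move/all_pred1P => ->; exists (size w).
Qed.

Lemma regular_cat (L1 L2 : seq X -> Prop) :
  regular L1 -> regular L2 ->
  regular (fun w => exists w1 w2, w = w1 ++ w2 /\ L1 w1 /\ L2 w2).
Proof.
move=> [Q1 [q1 [d1 [F1 H1]]]] [Q2 [q2 [d2 [F2 H2]]]].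
pose st (q : Q1) : {set Q2} := if F1 q then [set q2] else set0.
pose d (p : Q1 * {set Q2}) x :=
  (d1 p.1 x, [set d2 s x | s in p.2] :|: st (d1 p.1 x)).
exists (Q1 * {set Q2})%type, (q1, st q1), d,
  (fun p : Q1 * {set Q2} => [exists s in p.2, F2 s]) => w.
have Inv : forall w, (foldl d (q1, st q1) w).1 = foldl d1 q1 w /\
  forall s, s \in (foldl d (q1, st q1) w).2 <->
    exists w1 w2, w = w1 ++ w2 /\ F1 (foldl d1 q1 w1) /\ foldl d2 q2 w2 = s.
  elim/last_ind => [|v x [IH1 IH2]].
    split=> // s /=; rewrite /st; split.
      by case: ifP => F; rewrite ?inE // => /eqP ->; exists [::], [::].
    by case=> [[|? ?] [[|? ?] [//= _ [-> <-]]]]; rewrite inE.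
  rewrite !foldl_rcons /=; split; first by rewrite IH1.
  move=> s; rewrite inE; split.
    case/orP.
      case/imsetP => s' /IH2 [w1 [w2 [-> [F E]]]] ->.
      by exists w1, (rcons w2 x); rewrite rcons_cat foldl_rcons E.
    rewrite /st IH1; case: ifP => F; rewrite ?inE // => /eqP ->.
    by exists (rcons v x), [::]; rewrite cats0 foldl_rcons.
  case=> w1 [w2 []]; case/lastP: w2 => [|w2 y].
    rewrite cats0 => <- [F <-]; apply/orP; right.
    by rewrite /st IH1 -foldl_rcons F inE.
  rewrite -rcons_cat => /rcons_inj [Ev <-] [F <-]; apply/orP; left.
  rewrite foldl_rcons; apply/imsetP; exists (foldl d2 q2 w2) => //.
  by apply/IH2; exists w1, w2.
have [_ I2] := Inv w; split.
  case=> w1 [w2 [E [L1w L2w]]]; apply/existsP; exists (foldl d2 q2 w2).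
  move/H2: L2w => ->; rewrite andbT; apply/I2; exists w1, w2; split=> //; split=> //.
  by move/H1: L1w.
case/existsP => s /andP [/I2 [w1 [w2 [E [F Es]]]] Fs].
by exists w1, w2; split=> //; split; [apply/H1 | apply/H2; rewrite Es].
Qed.

Fixpoint mt (p : seq (bool * X)) (w : seq X) : Prop :=
  match p with
  | [::] => w = [::]
  | (false, x) :: p' => exists w', w = x :: w' /\ mt p' w'
  | (true, x) :: p' => exists n w', w = nseq n x ++ w' /\ mt p' w'
  end.

Lemma regular_mt p : regular (mt p).
Proof.
elim: p => [|[[] x] p IH] /=; first exact: regular_eps.
  apply: regular_ext (regular_cat (regular_star x) IH) => w; split.
    by case=> w1 [w2 [-> [[n ->] H]]]; exists n, w2.
  by case=> n [w2 [-> H]]; exists (nseq n x), w2; split=> //; split=> //; exists n.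
apply: regular_ext (regular_cat (regular_lit x) IH) => w; split.
  by case=> w1 [w2 [-> [-> H]]]; exists w2.
by case=> w2 [-> H]; exists [:: x], w2.
Qed.

Fixpoint mts (ps : seq (seq (bool * X))) (w : seq X) : Prop :=
  if ps is p :: ps' then mt p w \/ mts ps' w else False.

Lemma regular_mts ps : regular (mts ps).
Proof.
elim: ps => [|p ps IH] /=; first exact: regular_false.
exact: regular_or (regular_mt p) IH.
Qed.

End Reg.

Definition nf i j k : seq A2 := nseq i a2 ++ a1 :: nseq j a2 ++ nseq k a1.
Definition T2 i : rps_tableau := if i is 0 then [::] else [:: nseq i 2].
Definition S3 p i q : rps_tableau :=
  (nseq p.+1 1 ++ nseq i 2) :: (if q is 0 then [::] else [:: nseq q 2]).

Lemma Rr_cat u v : Rr (u ++ v) = foldl rins (Rr u) (map symval v).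
Proof. by rewrite /Rr map_cat foldl_cat. Qed.

Lemma rins_T2_2 i : rins (T2 i) 2 = T2 i.+1.
Proof. by case: i. Qed.

Lemma fold_T2 i n : foldl rins (T2 i) (map symval (nseq n a2)) = T2 (i + n).
Proof.
elim: n i => [|n IH] i /=; first by rewrite addn0.
by rewrite rins_T2_2 IH addSnnS.
Qed.

Lemma Rr_M i : Rr (nseq i a2) = T2 i.
Proof. by rewrite /Rr -[[::]]/(T2 0) fold_T2. Qed.

Lemma rins_T2_1 i : rins (T2 i) 1 = S3 0 i 0.
Proof. by case: i. Qed.

Lemma rins_S3_1 p i q : rins (S3 p i q) 1 = S3 p.+1 i q.
Proof. by []. Qed.

Lemma rins_S3_2 p i q : rins (S3 p i q) 2 = S3 p i q.+1.
Proof. by case: q. Qed.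

Lemma fold_S3 p i q s : foldl rins (S3 p i q) (map symval s) =
  S3 (p + count (pred1 a1) s) i (q + count (pred1 a2) s).
Proof.
elim: s p q => [|x s IH] p q /=; first by rewrite !addn0.
case: x => [[|[|n]] Hn] //.
  change (foldl rins (S3 p.+1 i q) (map symval s) =
    S3 (p + (1 + count (pred1 a1) s)) i (q + (0 + count (pred1 a2) s))).
  by rewrite IH add0n addSnnS.
change (foldl rins (rins (S3 p i q) 2) (map symval s) =
  S3 (p + (0 + count (pred1 a1) s)) i (q + (1 + count (pred1 a2) s))).
by rewrite rins_S3_2 IH add0n addSnnS.
Qed.

Lemma Rr_gen i s : Rr (nseq i a2 ++ a1 :: s) =
  S3 (count (pred1 a1) s) i (count (pred1 a2) s).
Proof.
rewrite Rr_cat Rr_M /= rins_T2_1 fold_S3 //.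
Qed.

Lemma Rr_nf i j k : Rr (nf i j k) = S3 k i j.
Proof.
rewrite /nf Rr_gen !count_cat !count_nseq /=.
by rewrite !mul0n !mul1n add0n addn0.
Qed.

Lemma S3_inj p i q p' i' q' : S3 p i q = S3 p' i' q' -> [/\ p = p', i = i' & q = q'].
Proof.
case=> E1 E2.
have C1 := congr1 (count (pred1 1)) E1.
have C2 := congr1 (count (pred1 2)) E1.
rewrite !count_cat !count_nseq /= !mul1n !mul0n ?addn0 ?add0n in C1 C2.
case: C1 => ->; split=> //.
case: q q' E2 => [|q] [|q'] // /(congr1 (fun l => size (head [::] l))) /=.
by rewrite !size_nseq.
Qed.

Lemma T2_inj i i' : T2 i = T2 i' -> i = i'.
Proof.
case: i i' => [|i] [|i'] // /(congr1 (fun l => size (head [::] l))) /=.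
by rewrite !size_nseq.
Qed.

Lemma T2_S3 i p i' q : T2 i <> S3 p i' q.
Proof. by case: i. Qed.

Lemma J_inj u v : J u -> J v -> Rr u = Rr v -> u = v.
Proof.
case=> [[i [j [k ->]]]|[i ->]] [[i' [j' [k' ->]]]|[i' ->]];
  rewrite -/(nf _ _ _) ?Rr_nf ?Rr_M.
- by case/S3_inj => -> -> ->.
- by move=> E; case: (T2_S3 (esym E)).
- by move/T2_S3.
- by move/T2_inj => ->.
Qed.

Lemma nseqS' (T : Type) n (x : T) : nseq n.+1 x = x :: nseq n x.
Proof. by []. Qed.

Section DZ.
Variable S : Type.
Implicit Types (u v : seq S) (x y : S).
Fixpoint dz (u v : seq S) : seq (option S * option S) :=
  match u, v with
  | x :: u', y :: v' => (Some x, Some y) :: dz u' v'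
  | [::], _ => map (fun y => (None, Some y)) v
  | _, [::] => map (fun x => (Some x, None)) u
  end.

Lemma dz_nil_r u : dz u [::] = map (fun x => (Some x, None)) u.
Proof. by case: u. Qed.

Lemma padR_cons n x u : padR n.+1 (x :: u) = Some x :: padR n u.
Proof. by rewrite /padR /= subSS. Qed.

Lemma padR_nil n : padR n ([::] : seq S) = nseq n None.
Proof. by rewrite /padR /= subn0. Qed.

Lemma zip_nseq n (a b : option S) : zip (nseq n a) (nseq n b) = nseq n (a, b).
Proof. by elim: n => //= n ->. Qed.

Lemma zip_padR n u v : size u <= n -> size v <= n ->
  zip (padR n u) (padR n v) = dz u v ++ nseq (n - maxn (size u) (size v)) (None, None).
Proof.
elim: n u v => [|n IH] [|x u] [|y v] //.
- by move=> _ _; rewrite !padR_nil zip_nseq.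
- move=> _ Hv; rewrite padR_nil padR_cons nseqS' [zip _ _]/= -(padR_nil n) IH //.
  by rewrite !max0n subSS.
- move=> Hu _; rewrite padR_nil padR_cons nseqS' [zip _ _]/= -(padR_nil n) IH //.
  by rewrite !maxn0 subSS dz_nil_r.
- by move=> Hu Hv; rewrite !padR_cons [zip _ _]/= IH // maxnSS subSS.
Qed.

Lemma deltaR_dz u v : deltaR u v = dz u v.
Proof.
rewrite /deltaR zip_padR ?leq_maxl ?leq_maxr // subnn cats0 //.
Qed.

Lemma zip_map_dz u v : size u = size v -> zip (map Some u) (map Some v) = dz u v.
Proof. by elim: u v => [|x u IH] [|y v] //= [] /IH ->. Qed.

Lemma deltaL_eq u v : size u = size v -> deltaL u v = dz u v.
Proof.
move=> E; rewrite /deltaL /padL E maxnn subnn /= -zip_map_dz //.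
Qed.

Lemma deltaL_cons u y v : size u = size v ->
  deltaL u (y :: v) = (None, Some y) :: dz u v.
Proof.
move=> E; rewrite /deltaL /padL /= E (maxn_idPr (leqnSn _)) subnn subSn // subnn /=.
by rewrite zip_map_dz.
Qed.

Lemma dz_nseq n x y u v :
  dz (nseq n x ++ u) (nseq n y ++ v) = nseq n (Some x, Some y) ++ dz u v.
Proof. by elim: n => //= n ->. Qed.

Lemma dz_shift_l n x u v :
  dz (x :: nseq n x ++ u) (nseq n x ++ v) = nseq n (Some x, Some x) ++ dz (x :: u) v.
Proof. by elim: n => //= n ->. Qed.

Lemma dz_shift_r n x u v :
  dz (nseq n x ++ u) (x :: nseq n x ++ v) = nseq n (Some x, Some x) ++ dz u (x :: v).
Proof. by elim: n => //= n ->. Qed.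

Lemma dz_same u : dz u u = map (fun x => (Some x, Some x)) u.
Proof. by elim: u => //= x u ->. Qed.
End DZ.
Arguments dz {S} u v : simpl nomatch.


Section DZ0.
Variable S : Type.
Implicit Types (u v : seq S) (x y : S).
Lemma dz_nseq_0l n x y v : dz (nseq n x) (nseq n y ++ v) = nseq n (Some x, Some y) ++ dz [::] v.
Proof. by rewrite -{1}[nseq n x]cats0 dz_nseq. Qed.
Lemma dz_nseq_0r n x y u : dz (nseq n x ++ u) (nseq n y) = nseq n (Some x, Some y) ++ dz u [::].
Proof. by rewrite -[nseq n y]cats0 dz_nseq. Qed.
Lemma dz_nseq_00 n x y : dz (nseq n x) (nseq n y) = nseq n (Some x, Some y).
Proof. by rewrite -[nseq n x]cats0 -[nseq n y]cats0 dz_nseq cats0. Qed.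
Lemma dz_shift_l_0l n x v : dz (x :: nseq n x) (nseq n x ++ v) = nseq n (Some x, Some x) ++ dz [:: x] v.
Proof. by rewrite -{1}[nseq n x]cats0 dz_shift_l. Qed.
Lemma dz_shift_l_0r n x u : dz (x :: nseq n x ++ u) (nseq n x) = nseq n (Some x, Some x) ++ dz (x :: u) [::].
Proof. by rewrite -{2}[nseq n x]cats0 dz_shift_l. Qed.
Lemma dz_shift_l_00 n x : dz (x :: nseq n x) (nseq n x) = nseq n (Some x, Some x) ++ [:: (Some x, None)].
Proof. by rewrite -[nseq n x]cats0 dz_shift_l. Qed.
Lemma dz_shift_r_0l n x v : dz (nseq n x) (x :: nseq n x ++ v) = nseq n (Some x, Some x) ++ dz [::] (x :: v).
Proof. by rewrite -{1}[nseq n x]cats0 dz_shift_r. Qed.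
Lemma dz_shift_r_0r n x u : dz (nseq n x ++ u) (x :: nseq n x) = nseq n (Some x, Some x) ++ dz u [:: x].
Proof. by rewrite -{2}[nseq n x]cats0 dz_shift_r. Qed.
Lemma dz_shift_r_00 n x : dz (nseq n x) (x :: nseq n x) = nseq n (Some x, Some x) ++ [:: (None, Some x)].
Proof. by rewrite -[nseq n x]cats0 dz_shift_r. Qed.
End DZ0.

Ltac dzs := repeat progress (rewrite ?dz_nseq ?dz_shift_l ?dz_shift_r ?dz_nseq_0l ?dz_nseq_0r
  ?dz_nseq_00 ?dz_shift_l_0l ?dz_shift_l_0r ?dz_shift_l_00 ?dz_shift_r_0l ?dz_shift_r_0r
  ?dz_shift_r_00 /=).

Lemma J_nf i j k : J (nf i j k).
Proof. by left; exists i, j, k. Qed.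
Lemma J_M i : J (nseq i a2).
Proof. by right; exists i. Qed.

Lemma rel_char (f : seq A2 -> seq A2) (g1 : nat -> nat -> nat -> seq A2) (g2 : nat -> seq A2)
  (H1 : forall i j k, Rr (f (nf i j k)) = Rr (g1 i j k))
  (H2 : forall i, Rr (f (nseq i a2)) = Rr (g2 i))
  (J1 : forall i j k, J (g1 i j k)) (J2 : forall i, J (g2 i)) u v :
  (J u /\ J v /\ rps2_eq (f u) v) <->
  (exists i j k, u = nf i j k /\ v = g1 i j k) \/ (exists i, u = nseq i a2 /\ v = g2 i).
Proof.
split.
  case=> [[[i [j [k Eu]]]|[i Eu]] [Jv E]]; rewrite /rps2_eq -/(nf _ _ _) in Eu E; subst u.
    by left; exists i, j, k; split=> //; apply: J_inj => //; rewrite -H1.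
  by right; exists i; split=> //; apply: J_inj => //; rewrite -H2.
case=> [[i [j [k [-> ->]]]]|[i [-> ->]]].
  by split; [exact: J_nf | split; [exact: J1 | exact: H1]].
by split; [exact: J_M | split; [exact: J2 | exact: H2]].
Qed.

Definition Lg (delta : seq A2 -> seq A2 -> seq (option A2 * option A2))
  (g1 : nat -> nat -> nat -> seq A2) (g2 : nat -> seq A2) w :=
  (exists i j k, w = delta (nf i j k) (g1 i j k)) \/ (exists i, w = delta (nseq i a2) (g2 i)).

Lemma conv_char delta (R : seq A2 -> seq A2 -> Prop) g1 g2
  (HR : forall u v, R u v <->
    (exists i j k, u = nf i j k /\ v = g1 i j k) \/ (exists i, u = nseq i a2 /\ v = g2 i)) w :
  conv_image delta R w <-> Lg delta g1 g2 w.
Proof.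
split.
  case=> u [v [/HR [[i [j [k [-> ->]]]]|[i [-> ->]]] <-]].
    by left; exists i, j, k.
  by right; exists i.
case=> [[i [j [k ->]]]|[i ->]].
  by exists (nf i j k), (g1 i j k); split=> //; apply/HR; left; exists i, j, k.
by exists (nseq i a2), (g2 i); split=> //; apply/HR; right; exists i.
Qed.

Notation X := (option A2 * option A2)%type.
Notation z22 := (Some a2, Some a2).
Notation z11 := (Some a1, Some a1).
Notation z12 := (Some a1, Some a2).
Notation z21 := (Some a2, Some a1).
Notation zN1 := (@None A2, Some a1).
Notation zN2 := (@None A2, Some a2).
Notation "'St' x" := (true, x) (at level 10).
Notation "'Lt' x" := (false, x) (at level 10).

Ltac mt_step := first
  [ eexists; split; [reflexivity|]
  | eexists; eexists; split; [reflexivity|]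
  | eexists; exists [::]; split; [by rewrite cats0|]
  | exists 0; eexists; split; [reflexivity|] ].
Ltac mt_solve := repeat mt_step; reflexivity.
Ltac mts_solve := simpl; repeat (first [left; mt_solve | right]).

Ltac mt_dest := repeat match goal with
  | H : _ \/ _ |- _ => destruct H as [H|H]
  | H : False |- _ => destruct H
  | H : @ex nat _ |- _ => let n := fresh "n" in destruct H as [n H]
  | H : exists _, _ |- _ => let w := fresh "w" in destruct H as [w H]
  | H : _ /\ _ |- _ => let E := fresh "E" in destruct H as [E H]
  end; subst.

Ltac szs := do 6 (rewrite ?size_cat ?size_nseq /=); lia.

Lemma deltaL_consE (S : Type) (x0 : S) (u v : seq S) : (size u).+1 = size v ->
  deltaL u v = (None, Some (head x0 v)) :: dz u (behead v).
Proof. by case: v => // y v [] E; rewrite deltaL_cons. Qed.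

Ltac compR := rewrite deltaR_dz /nf /=; dzs; rewrite ?cats0.
Ltac compL := rewrite (deltaL_consE a1); [rewrite /nf /=; dzs; rewrite ?cats0 | rewrite /nf; szs].
Ltac compE := rewrite deltaL_eq; [rewrite /nf /=; dzs; rewrite ?cats0 | rewrite /nf; szs].

Definition gE i j k := nf i j k.
Definition hE i := nseq i a2.
Definition gR1 i j k := nseq i a2 ++ a1 :: nseq j a2 ++ a1 :: nseq k a1.
Definition hR1 i := nseq i a2 ++ [:: a1].
Definition gR2 i j k := nseq i a2 ++ a1 :: a2 :: nseq j a2 ++ nseq k a1.
Definition hR2 i := a2 :: nseq i a2.
Definition gL1 i j k := a1 :: nseq i a2 ++ nseq j a2 ++ a1 :: nseq k a1.
Definition hL1 i := a1 :: nseq i a2.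
Definition gL2 i j k := a2 :: nseq i a2 ++ a1 :: nseq j a2 ++ nseq k a1.
Definition hL2 i := a2 :: nseq i a2.

Lemma langR_E : regular (Lg (@deltaR A2) gE hE).
Proof.
apply: (regular_ext _ (regular_mts [:: [:: St z22; Lt z11; St z22; St z11]; [:: St z22]])) => w.
rewrite /Lg /gE /hE; split.
- move=> H; simpl in H; mt_dest.
  + by left; exists n, n0, n1; compR.
  + by right; exists n; compR.
- case=> [[i [j [k ->]]]|[i ->]]; compR; mts_solve.
Qed.

Lemma langL_E : regular (Lg (@deltaL A2) gE hE).
Proof.
apply: (regular_ext _ (regular_mts [:: [:: St z22; Lt z11; St z22; St z11]; [:: St z22]])) => w.
rewrite /Lg /gE /hE; split.
- move=> H; simpl in H; mt_dest.
  + by left; exists n, n0, n1; compE.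
  + by right; exists n; compE.
- case=> [[i [j [k ->]]]|[i ->]]; compE; mts_solve.
Qed.

Lemma langR_R1 : regular (Lg (@deltaR A2) gR1 hR1).
Proof.
apply: (regular_ext _ (regular_mts [:: [:: St z22; Lt z11; St z22; St z11; Lt zN1];
  [:: St z22; Lt zN1]])) => w.
rewrite /Lg /gR1 /hR1; split.
- move=> H; simpl in H; mt_dest.
  + by left; exists n, n0, n1; compR.
  + by right; exists n; compR.
- case=> [[i [j [k ->]]]|[i ->]]; compR; mts_solve.
Qed.

Lemma langL_R1 : regular (Lg (@deltaL A2) gR1 hR1).
Proof.
apply: (regular_ext _ (regular_mts [::
  [:: Lt zN1; Lt z11; St z11];
  [:: Lt zN1; Lt z12; St z22; Lt z21; St z11];
  [:: Lt zN2; St z22; Lt z21; Lt z11; St z11];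
  [:: Lt zN2; St z22; Lt z21; Lt z12; St z22; Lt z21; St z11];
  [:: Lt zN1];
  [:: Lt zN2; St z22; Lt z21]])) => w.
rewrite /Lg /gR1 /hR1; split.
- move=> H; simpl in H; mt_dest.
  + by left; exists 0, 0, n; compL.
  + by left; exists 0, n.+1, n0; compL.
  + by left; exists n.+1, 0, n0; compL.
  + by left; exists n.+1, n0.+1, n1; compL.
  + by right; exists 0; compL.
  + by right; exists n.+1; compL.
- case=> [[[|i] [[|j] [k ->]]]|[[|i] ->]]; compL; mts_solve.
Qed.

Lemma langR_R2 : regular (Lg (@deltaR A2) gR2 hR2).
Proof.
apply: (regular_ext _ (regular_mts [::
  [:: St z22; Lt z11; St z22; Lt zN2];
  [:: St z22; Lt z11; St z22; Lt z12; St z11; Lt zN1];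
  [:: St z22; Lt zN2]])) => w.
rewrite /Lg /gR2 /hR2; split.
- move=> H; simpl in H; mt_dest.
  + by left; exists n, n0, 0; compR.
  + by left; exists n, n0, n1.+1; compR.
  + by right; exists n; compR.
- case=> [[i [j [[|k] ->]]]|[i ->]]; compR; mts_solve.
Qed.

Lemma langL_R2 : regular (Lg (@deltaL A2) gR2 hR2).
Proof.
apply: (regular_ext _ (regular_mts [::
  [:: Lt zN1; Lt z12; St z22; St z11];
  [:: Lt zN2; St z22; Lt z21; Lt z12; St z22; St z11];
  [:: Lt zN2; St z22]])) => w.
rewrite /Lg /gR2 /hR2; split.
- move=> H; simpl in H; mt_dest.
  + by left; exists 0, n, n0; compL.
  + by left; exists n.+1, n0, n1; compL.
  + by right; exists n; compL.
- case=> [[[|i] [j [k ->]]]|[i ->]]; compL; mts_solve.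
Qed.

Lemma langR_L1 : regular (Lg (@deltaR A2) gL1 hL1).
Proof.
apply: (regular_ext _ (regular_mts [::
  [:: Lt z11; St z22; St z11; Lt zN1];
  [:: Lt z21; St z22; Lt z12; St z22; St z11; Lt zN1];
  [:: Lt zN1];
  [:: Lt z21; St z22; Lt zN2]])) => w.
rewrite /Lg /gL1 /hL1; split.
- move=> H; simpl in H; mt_dest.
  + by left; exists 0, n, n0; compR.
  + by left; exists n.+1, n0, n1; compR.
  + by right; exists 0; compR.
  + by right; exists n.+1; compR.
- case=> [[[|i] [j [k ->]]]|[[|i] ->]]; compR; mts_solve.
Qed.

Lemma langL_L1 : regular (Lg (@deltaL A2) gL1 hL1).
Proof.
apply: (regular_ext _ (regular_mts [::
  [:: Lt zN1; St z22; Lt z11; St z11];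
  [:: Lt zN1; St z22; Lt z12; St z22; Lt z21; St z11];
  [:: Lt zN1; St z22]])) => w.
rewrite /Lg /gL1 /hL1; split.
- move=> H; simpl in H; mt_dest.
  + by left; exists n, 0, n0; compL.
  + by left; exists n, n0.+1, n1; compL.
  + by right; exists n; compL.
- case=> [[i [[|j] [k ->]]]|[i ->]]; compL; mts_solve.
Qed.

Lemma langR_L2 : regular (Lg (@deltaR A2) gL2 hL2).
Proof.
apply: (regular_ext _ (regular_mts [::
  [:: St z22; Lt z12; St z11; Lt zN1];
  [:: St z22; Lt z12; Lt z21; St z22; Lt zN2];
  [:: St z22; Lt z12; Lt z21; St z22; Lt z12; St z11; Lt zN1];
  [:: St z22; Lt zN2]])) => w.
rewrite /Lg /gL2 /hL2; split.
- move=> H; simpl in H; mt_dest.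
  + by left; exists n, 0, n0; compR.
  + by left; exists n, n0.+1, 0; compR.
  + by left; exists n, n0.+1, n1.+1; compR.
  + by right; exists n; compR.
- case=> [[i [[|j] [k ->]]]|[i ->]]; [|case: k => [|k]|]; compR; mts_solve.
Qed.

Lemma langL_L2 : regular (Lg (@deltaL A2) gL2 hL2).
Proof.
apply: (regular_ext _ (regular_mts [::
  [:: Lt zN2; St z22; Lt z11; St z22; St z11];
  [:: Lt zN2; St z22]])) => w.
rewrite /Lg /gL2 /hL2; split.
- move=> H; simpl in H; mt_dest.
  + by left; exists n, n0, n1; compL.
  + by right; exists n; compL.
- case=> [[i [j [k ->]]]|[i ->]]; compL; mts_solve.
Qed.

Lemma reg_from delta (f : seq A2 -> seq A2) (g1 : nat -> nat -> nat -> seq A2) (g2 : nat -> seq A2)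
  (H1 : forall i j k, Rr (f (nf i j k)) = Rr (g1 i j k))
  (H2 : forall i, Rr (f (nseq i a2)) = Rr (g2 i))
  (J1 : forall i j k, J (g1 i j k)) (J2 : forall i, J (g2 i)) :
  regular (Lg delta g1 g2) ->
  regular (conv_image delta (fun u v => J u /\ J v /\ rps2_eq (f u) v)).
Proof.
apply: regular_ext => w; symmetry; apply: conv_char => u v.
exact: rel_char.
Qed.

Ltac rrc := rewrite !Rr_gen; do 4 (rewrite ?count_cat ?count_nseq /=); congr S3; lia.

Lemma HE1 i j k : Rr (nf i j k ++ [::]) = Rr (gE i j k).
Proof. by rewrite cats0. Qed.
Lemma HE2 i : Rr (nseq i a2 ++ [::]) = Rr (hE i).
Proof. by rewrite cats0. Qed.
Lemma JE1 i j k : J (gE i j k). Proof. exact: J_nf. Qed.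
Lemma JE2 i : J (hE i). Proof. exact: J_M. Qed.

Lemma HR11 i j k : Rr (nf i j k ++ [:: a1]) = Rr (gR1 i j k).
Proof. rewrite /nf /gR1 -catA cat_cons -catA; rrc. Qed.
Lemma HR12 i : Rr (nseq i a2 ++ [:: a1]) = Rr (hR1 i).
Proof. by []. Qed.
Lemma JR11 i j k : J (gR1 i j k). Proof. by left; exists i, j, k.+1. Qed.
Lemma JR12 i : J (hR1 i). Proof. by left; exists i, 0, 0. Qed.

Lemma HR21 i j k : Rr (nf i j k ++ [:: a2]) = Rr (gR2 i j k).
Proof. rewrite /nf /gR2 -catA cat_cons -catA; rrc. Qed.
Lemma HR22 i : Rr (nseq i a2 ++ [:: a2]) = Rr (hR2 i).
Proof.
by rewrite Rr_cat Rr_M /= rins_T2_2 -[hR2 i]/(nseq i.+1 a2) Rr_M.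
Qed.
Lemma JR21 i j k : J (gR2 i j k). Proof. by left; exists i, j.+1, k. Qed.
Lemma JR22 i : J (hR2 i). Proof. by right; exists i.+1. Qed.

Lemma HL11 i j k : Rr (a1 :: nf i j k) = Rr (gL1 i j k).
Proof.
rewrite -[a1 :: nf i j k]/(nseq 0 a2 ++ a1 :: nf i j k).
rewrite -[gL1 i j k]/(nseq 0 a2 ++ a1 :: (nseq i a2 ++ nseq j a2 ++ a1 :: nseq k a1)).
rewrite /nf; rrc.
Qed.
Lemma HL12 i : Rr (a1 :: nseq i a2) = Rr (hL1 i).
Proof. by []. Qed.
Lemma JL11 i j k : J (gL1 i j k).
Proof. by left; exists 0, (i + j), k.+1; rewrite /gL1 nseqD -catA. Qed.
Lemma JL12 i : J (hL1 i).
Proof. by left; exists 0, i, 0; rewrite /= cats0. Qed.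

Lemma HL21 i j k : Rr (a2 :: nf i j k) = Rr (gL2 i j k).
Proof. by []. Qed.
Lemma HL22 i : Rr (a2 :: nseq i a2) = Rr (hL2 i).
Proof. by []. Qed.
Lemma JL21 i j k : J (gL2 i j k). Proof. by left; exists i.+1, j, k. Qed.
Lemma JL22 i : J (hL2 i). Proof. by right; exists i.+1. Qed.

Lemma regular_J : regular J.
Proof.
apply: (regular_ext _ (regular_mts [:: [:: St a2; Lt a1; St a2; St a1]; [:: St a2]])) => w.
split.
- move=> H; simpl in H; mt_dest.
  + by left; exists n, n0, n1; rewrite cats0.
  + by right; exists n; rewrite cats0.
- case=> [[i [j [k ->]]]|[i ->]]; mts_solve.
Qed.

Lemma surj w : exists u, J u /\ rps2_eq u w.
Proof.
elim/last_ind: w => [|w x [u [Ju E]]]; first by exists [::]; split=> //; right; exists 0.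
have Ex : Rr (rcons w x) = Rr (u ++ [:: x]).
  by rewrite -cats1 !Rr_cat E.
rewrite /rps2_eq Ex.
case: x {Ex} => [[|[|n]] Hn] //.
  have -> : Ordinal Hn = a1 by apply: val_inj.
  case: Ju => [[i [j [k ->]]]|[i ->]].
    by exists (gR1 i j k); split; [exact: JR11 | rewrite -/(nf i j k) HR11].
  by exists (hR1 i); split; [exact: JR12 | rewrite HR12].
have -> : Ordinal Hn = a2 by apply: val_inj.
case: Ju => [[i [j [k ->]]]|[i ->]].
  by exists (gR2 i j k); split; [exact: JR21 | rewrite -/(nf i j k) HR21].
by exists (hR2 i); split; [exact: JR22 | rewrite HR22].
Qed.

Theorem proposition6p5 : biautomatic_structure rps2_eq J.
Proof.
split; first exact: regular_J.
  exact: surj.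
case=> [x|] /=.
  case: x => [[|[|n]] Hn] //.
    have -> : Ordinal Hn = a1 by apply: val_inj.
    split.
    - exact: (reg_from (f := fun u => u ++ [:: a1]) HR11 HR12 JR11 JR12 langR_R1).
    - exact: (reg_from (f := fun u => a1 :: u) HL11 HL12 JL11 JL12 langR_L1).
    - exact: (reg_from (f := fun u => u ++ [:: a1]) HR11 HR12 JR11 JR12 langL_R1).
    - exact: (reg_from (f := fun u => a1 :: u) HL11 HL12 JL11 JL12 langL_L1).
  have -> : Ordinal Hn = a2 by apply: val_inj.
  split.
  - exact: (reg_from (f := fun u => u ++ [:: a2]) HR21 HR22 JR21 JR22 langR_R2).
  - exact: (reg_from (f := fun u => a2 :: u) HL21 HL22 JL21 JL22 langR_L2).
  - exact: (reg_from (f := fun u => u ++ [:: a2]) HR21 HR22 JR21 JR22 langL_R2).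
  - exact: (reg_from (f := fun u => a2 :: u) HL21 HL22 JL21 JL22 langL_L2).
split.
- exact: (reg_from (f := fun u => u ++ [::]) HE1 HE2 JE1 JE2 langR_E).
- exact: (reg_from (f := fun u => u) (fun i j k => erefl) (fun i => erefl) JE1 JE2 langR_E).
- exact: (reg_from (f := fun u => u ++ [::]) HE1 HE2 JE1 JE2 langL_E).
- exact: (reg_from (f := fun u => u) (fun i j k => erefl) (fun i => erefl) JE1 JE2 langL_E).
Qed.
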